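(* For every integer $t\ge 2$, the dynamic geometric grid $G^{(t)}$ satisfies: (i) (geometric spacing) for every integer $d$ with $1\le d\le t/2$ there exists $g\in G^{(t)}$ with $d/2\le g\le d$; (ii) (logarithmic cardinality) $|G^{(t)}|<3\log t$; (iii) (recycling) $\{g-1: g\in G^{(t+1)}\setminus\{1\}\}\subseteq G^{(t)}$, equivalently $(t+1)-G^{(t+1)}\subseteq (t-G^{(t)})\cup\{t\}$.
   Context: $\log$ denotes the natural logarithm. For integers $a$ and $b\ge 1$, $a \bmod b = a-b\lfloor a/b\rfloor$. For a set $\mathcal X$ of reals and a real $x$, $x-\mathcal X=\{x-s:s\in\mathcal X\}$. For an integer $t\ge 2$ the dynamic geometric grid is $$G^{(t)}=\{1\}\cup\bigcup_{j=1}^{\lfloor \log_2\{(t-1)/3\}\rfloor+1}\{g^{(t)}_{L,j}\}\cup\bigcup_{j=1}^{\lfloor\log_2(t-1)\rfloor-1}\{g^{(t)}_{R,j}\},$$ where $g^{(t)}_{L,j}=2^j+\{(t-1)\bmod 2^{j-1}\}$ and $g^{(t)}_{R,j}=g^{(t)}_{L,j}+2^{j-1}$; a union whose upper index is smaller than $1$ is empty. *)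

(* Defs.v *)
From mathcomp Require Import all_boot.
From Stdlib Require Import Reals.

Set Implicit Arguments.
Unset Strict Implicit.
Unset Printing Implicit Defensive.

(* Upper index of the left family: floor(log2((t-1)/3)) + 1, and an empty
   union when this is < 1.  For t-1 >= 3, floor(log2((t-1)/3)) is the
   largest j with 2^j <= (t-1)/3, i.e. trunc_log 2 ((t-1) %/ 3);
   for 1 <= t-1 < 3 the value floor(log2((t-1)/3)) + 1 is <= 0. *)
Definition gridL_top (t : nat) : nat :=
  if 3 <= t - 1 then (trunc_log 2 ((t - 1) %/ 3)).+1 else 0.

Definition gridR_top (t : nat) : nat := trunc_log 2 (t - 1) - 1.

Definition gL (t j : nat) : nat := 2 ^ j + (t - 1) %% 2 ^ (j - 1).
Definition gR (t j : nat) : nat := gL t j + 2 ^ (j - 1).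

Definition grid (t : nat) : seq nat :=
  1 :: [seq gL t j | j <- iota 1 (gridL_top t)]
    ++ [seq gR t j | j <- iota 1 (gridR_top t)].

Definition grid_card (t : nat) : nat := size (undup (grid t)).

(* Main.v *)
Require Import Defs.
From mathcomp Require Import all_boot.
From Stdlib Require Import Reals.
From Stdlib Require Import Lra Lia.
From mathcomp Require Import zify.
From mathcomp Require Import ssrnat.

Lemma exp_mul_nat (n : nat) (x : R) : exp (INR n * x) = (exp x ^ n)%R.
Proof.
induction n as [|n IH].
- simpl. rewrite Rmult_0_l. apply exp_0.
- rewrite S_INR. replace ((INR n + 1) * x)%R with (INR n * x + x)%R by ring.
  rewrite exp_plus IH. simpl. ring.
Qed.

Lemma pow_lt_mono (x y : R) (n : nat) : (0 <= x)%R -> (x < y)%R -> (0 < n)%coq_nat -> (x ^ n < y ^ n)%R.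
Proof.
intros Hx Hxy Hn. induction n as [|n IH]; [lia|].
destruct n as [|n]. simpl; lra.
assert (IH' : (x ^ S n < y ^ S n)%R) by (apply IH; lia).
change (x * x ^ S n < y * y ^ S n)%R.
assert (0 <= x ^ S n)%R by (apply pow_le; lra).
nra.
Qed.

Lemma ln2_gt : (2/3 < ln 2)%R.
Proof.
destruct (Rlt_or_le (2/3) (ln 2)) as [H|H]; [exact H|exfalso].
assert (E : (exp (ln 2) <= exp (2/3))%R).
{ destruct H as [H|H]; [left; apply exp_increasing; exact H| rewrite H; right; reflexivity]. }
rewrite exp_ln in E; [|lra].
assert (H1 : (1 + - (1/18) < exp (- (1/18)))%R) by (apply exp_ineq1; lra).
assert (H2 : (exp (1/18) * exp (-(1/18)) = 1)%R).
{ rewrite -exp_plus. replace (1/18 + - (1/18))%R with 0%R by ring. apply exp_0. }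
assert (H3 : (exp (1/18) < 18/17)%R).
{ assert (0 < exp (1/18))%R by apply exp_pos. nra. }
assert (H4 : (exp (1/18) ^ 12 < (18/17) ^ 12)%R).
{ apply pow_lt_mono; [left; apply exp_pos| exact H3| lia]. }
rewrite -exp_mul_nat in H4.
replace (INR 12 * (1/18))%R with (2/3)%R in H4 by (simpl; field).
simpl in H4. lra.
Qed.

Lemma tl_spec m j : 0 < m -> (j <= trunc_log 2 m) = (2 ^ j <= m).
Proof.
move=> m0; apply/idP/idP => H.
  apply: leq_trans (trunc_logP (isT : 1 < 2) m0); by rewrite leq_exp2l.
exact: trunc_log_max.
Qed.

Lemma Ltop_spec t j : 0 < j -> (j <= gridL_top t) = (3 * 2 ^ (j - 1) <= t - 1).
Proof.
case: j => // i _; rewrite subn1 /=; rewrite /gridL_top; case: ifP => H.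
  have q0 : 0 < (t - 1) %/ 3 by rewrite divn_gt0.
  by rewrite ltnS tl_spec // leq_divRL // mulnC.
have := expn_gt0 2 i; lia.
Qed.

Lemma Rtop_spec t j : 0 < j -> (j <= gridR_top t) = (2 ^ j.+1 <= t - 1).
Proof.
move=> j0; rewrite /gridR_top.
case: (posnP (t - 1)) => [->|m0].
  rewrite trunc_log0 /=. have := expn_gt0 2 j.+1; lia.
rewrite -tl_spec //; lia.
Qed.

Lemma one_in t : 1 \in grid t.
Proof. by rewrite /grid inE eqxx. Qed.

Lemma gL_in t j : 0 < j -> 3 * 2 ^ (j - 1) <= t - 1 -> gL t j \in grid t.
Proof.
move=> j0 H; rewrite /grid inE mem_cat; apply/orP; right; apply/orP; left.
apply/mapP; exists j => //; rewrite mem_iota j0 /= add1n ltnS Ltop_spec //.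
Qed.

Lemma gR_in t j : 0 < j -> 2 ^ j.+1 <= t - 1 -> gR t j \in grid t.
Proof.
move=> j0 H; rewrite /grid inE mem_cat; apply/orP; right; apply/orP; right.
apply/mapP; exists j => //; rewrite mem_iota j0 /= add1n ltnS Rtop_spec //.
Qed.

Lemma grid_inv t g : g \in grid t ->
  g = 1 \/ (exists2 j, 0 < j /\ 3 * 2 ^ (j - 1) <= t - 1 & g = gL t j)
        \/ (exists2 j, 0 < j /\ 2 ^ j.+1 <= t - 1 & g = gR t j).
Proof.
rewrite /grid inE mem_cat => /orP[/eqP ->|/orP[]]; first by left.
  move=> /mapP[j]; rewrite mem_iota add1n ltnS => /andP[j0 jl] ->.
  by right; left; exists j; rewrite -?Ltop_spec.
move=> /mapP[j]; rewrite mem_iota add1n ltnS => /andP[j0 jl] ->.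
by right; right; exists j; rewrite -?Rtop_spec.
Qed.

Lemma mod_pred t p : 0 < p -> 0 < t ->
  (t - 1) %% p = if t %% p == 0 then p - 1 else t %% p - 1.
Proof.
move=> p0 t0; have Ht := divn_eq t p; have rp := ltn_pmod t p0.
move: Ht rp; set q := t %/ p; set r := t %% p => Ht rp.
case: eqP => r0.
  case: q Ht => [|q'] Ht; first by lia.
  rewrite (_ : t - 1 = q' * p + (p - 1)); last by rewrite Ht mulSn; lia.
  by rewrite modnMDl modn_small //; lia.
rewrite (_ : t - 1 = q * p + (r - 1)); last by lia.
by rewrite modnMDl modn_small //; lia.
Qed.

Lemma INR_expn2 a : INR (2 ^ a) = (2 ^ a)%R.
Proof.
elim: a => [|a IH]; first by [].
rewrite expnS -multE mult_INR IH /=; lra.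
Qed.

Lemma powE m n : Nat.pow m n = expn m n.
Proof. by elim: n => //= n IH; rewrite expnS -IH. Qed.

Lemma part1 t : forall d : nat, 1 <= d -> 2 * d <= t ->
     exists g, g \in grid t /\ d <= 2 * g /\ g <= d.
Proof.
move=> d d1 d2t.
case: (leqP d 2) => dle.
  by exists 1; split; [exact: one_in| lia].
have d0 : 0 < d by lia.
move: (trunc_log_bounds (isT : 1 < 2) d0) => /=.
case: (trunc_log 2 d) => [|i] /andP[lo hi]; first by lia.
rewrite !expnS in lo hi.
have := ltn_pmod (t - 1) (expn_gt0 2 i) => hm.
case: (leqP (3 * 2 ^ i) d) => h3.
  exists (gL t i.+1); split.
    by apply: gL_in => //; rewrite !subSS !subn0; lia.
  rewrite /gL ?powE !subSS !subn0 ?expnS; lia.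
case: i lo hi hm h3 => [|h] lo hi hm h3; first by rewrite expn0 in h3; lia.
have := ltn_pmod (t - 1) (expn_gt0 2 h) => hm'.
rewrite expnS in lo hi hm h3.
exists (gR t h.+1); split.
  by apply: gR_in => //; rewrite !expnS; lia.
by rewrite /gR /gL ?powE !subSS !subn0 !expnS; lia.
Qed.

Lemma part3 t : 2 <= t ->
  (forall g : nat, g \in grid t.+1 -> g != 1 -> g - 1 \in grid t).
Proof.
move=> ht g gin g1.
have t0 : 0 < t by lia.
case: (@grid_inv _ _ gin) => [gE|[[j [j0 hj] ->]|[j [j0 hj] ->]]].
- by rewrite gE eqxx in g1.
- case: j j0 hj => // i _ hj; rewrite !subSS !subn0 in hj.
  have Hp := @mod_pred _ _ (expn_gt0 2 i) t0.
  rewrite /gL ?powE !subSS !subn0.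
  case E: (t %% 2 ^ i == 0).
    move/eqP: E => E; rewrite E.
    case: i hj Hp E => [|h] hj Hp E.
      by rewrite expn1 addn0 /=; exact: one_in.
    have Eh : t %% 2 ^ h == 0.
      have : 2 ^ h %| t.
        apply: dvdn_trans (dvdn_exp2l 2 (leqnSn h)) _.
        by rewrite /dvdn E.
      by rewrite /dvdn.
    have -> : 2 ^ h.+2 + 0 - 1 = gR t h.+1.
      rewrite /gR /gL ?powE !subSS !subn0 (@mod_pred _ _ (expn_gt0 2 h) t0) Eh !expnS.
      have := expn_gt0 2 h; lia.
    apply: gR_in => //; rewrite !expnS in hj *; lia.
  have Et : t != 3 * 2 ^ i.
    by apply/eqP => teq; move: E; rewrite teq modnMl.
  have rpos : 0 < t %% 2 ^ i by rewrite lt0n E.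
  have -> : 2 ^ i.+1 + t %% 2 ^ i - 1 = gL t i.+1.
    by rewrite /gL ?powE !subSS !subn0 Hp E; lia.
  by apply: gL_in => //; rewrite !subSS !subn0; lia.
- case: j j0 hj => // i _ hj; rewrite !subSS !subn0 in hj.
  have Hp := @mod_pred _ _ (expn_gt0 2 i) t0.
  rewrite /gR /gL ?powE !subSS !subn0.
  case E: (t %% 2 ^ i == 0).
    move/eqP: E => E; rewrite E.
    have -> : 2 ^ i.+1 + 0 + 2 ^ i - 1 = gL t i.+1.
      rewrite /gL ?powE !subSS !subn0 Hp E eqxx !expnS.
      have := expn_gt0 2 i; lia.
    by apply: gL_in => //; rewrite !subSS !subn0; rewrite !expnS in hj *; lia.
  have Et : t != 2 ^ i.+2.
    by apply/eqP => teq; move: E; rewrite teq !expnS mulnA modnMl.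
  have rpos : 0 < t %% 2 ^ i by rewrite lt0n E.
  have -> : 2 ^ i.+1 + t %% 2 ^ i + 2 ^ i - 1 = gR t i.+1.
    by rewrite /gR /gL ?powE !subSS !subn0 Hp E; lia.
  by apply: gR_in => //; lia.
Qed.

Lemma card_bound t : 2 <= t ->
  exists a, grid_card t <= a + (a - 1) + 1 /\ 2 ^ a < t.
Proof.
move=> ht.
have m0 : 0 < t - 1 by lia.
exists (trunc_log 2 (t - 1)).
have ha := trunc_logP (isT : 1 < 2) m0.
have hb := trunc_log_ltn (t - 1) (isT : 1 < 2).
split; last by lia.
apply: leq_trans (size_undup _) _.
rewrite /grid /= size_cat !size_map !size_iota.
have hL : gridL_top t <= trunc_log 2 (t - 1).
  case E: (gridL_top t) => [|l] //.
  have := @Ltop_spec t _ (ltn0Sn l); rewrite E leqnn subn1 /= => /esym H3.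
  rewrite leqNgt; apply/negP => Hlt.
  have : 2 ^ trunc_log 2 (t - 1) <= 2 ^ l by rewrite leq_exp2l.
  rewrite expnS in hb; lia.
rewrite /gridR_top; lia.
Qed.

Lemma part2 t : 2 <= t -> (INR (grid_card t) < 3 * ln (INR t))%R.
Proof.
move=> ht; have [a [hc ha]] := @card_bound t ht.
have l2 := ln2_gt.
have Ht2 : (2 <= INR t)%R.
  by apply: (le_INR 2 t); apply/leP.
case: a hc ha => [|a] hc ha.
  have hc1 : (INR (grid_card t) <= 1)%R by apply: (le_INR _ 1); apply/leP; lia.
  have : (ln 2 <= ln (INR t))%R.
    case: (Rle_lt_or_eq_dec _ _ Ht2) => [H|<-]; last by apply: Rle_refl.
    by apply: Rlt_le; apply: ln_increasing => //; lra.
  lra.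
have hc1 : (INR (grid_card t) <= INR a.+1 + INR a.+1)%R.
  rewrite -plus_INR; apply: le_INR; apply/leP; rewrite plusE; lia.
have hp : (INR (2 ^ a.+1) < INR t)%R by apply: lt_INR; apply/ltP.
rewrite INR_expn2 in hp.
have hpos : (0 < 2 ^ a.+1)%R by apply: pow_lt; lra.
have := ln_increasing _ _ hpos hp; rewrite ln_pow; last by lra.
have : (1 <= INR a.+1)%R by rewrite S_INR; have := pos_INR a; lra.
move=> h1 h2.
nra.
Qed.

Theorem lemma1 (t : nat) (ht : 2 <= t) :
  (forall d : nat, 1 <= d -> 2 * d <= t ->
     exists g, g \in grid t /\ d <= 2 * g /\ g <= d) /\
  (INR (grid_card t) < 3 * ln (INR t))%R /\
  (forall g : nat, g \in grid t.+1 -> g != 1 -> g - 1 \in grid t).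
Proof.
split; first exact: part1.
split; first exact: part2.
exact: part3.
Qed.
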